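(* The rational group $\mathcal{R}$ is flexible: for every pair $E_1,E_2$ of proper nonempty clopen subsets of $\{0,1\}^\omega$ there exists $g\in\mathcal{R}$ with $g(E_1)\subseteq E_2$.
   Context: An asynchronous binary transducer is $(S,s_0,t,o)$ with $S$ finite, $s_0\in S$, $t\colon S\times\{0,1\}\to S$, $o\colon S\times\{0,1\}\to\{0,1\}^*$. For a state $s$ and sequence $\sigma_1\sigma_2\cdots$ let $s_1=s$, $s_{n+1}=t(s_n,\sigma_n)$, and $o(s,\sigma_1\sigma_2\cdots)=o(s_1,\sigma_1)o(s_2,\sigma_2)\cdots$. A homeomorphism $f$ of $\{0,1\}^\omega$ is rational if some transducer satisfies $f(\psi)=o(s_0,\psi)$ for all $\psi$; $\mathcal{R}$ is the group of rational homeomorphisms. *)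

(* Defs.v *)
From HB Require Import structures.
From mathcomp Require Import all_boot all_order all_algebra.
From mathcomp Require Import all_classical all_reals all_analysis.

Set Implicit Arguments.
Unset Strict Implicit.
Unset Printing Implicit Defensive.

Local Open Scope classical_set_scope.

(* {0,1}^omega is [cantor_space] = nat -> bool with the product topology. *)

Definition homeomorphism (T : topologicalType) (f : T -> T) : Prop :=
  exists g : T -> T,
    [/\ cancel f g, cancel g f, continuous f & continuous g].

(* Asynchronous binary transducer (S, s0, t, o), S finite. *)
Record transducer := Transducer {
  tr_state : finType;
  tr_init : tr_state;
  tr_trans : tr_state -> bool -> tr_state;
  tr_out : tr_state -> bool -> seq bool }.

(* s_1 = s, s_{n+1} = t(s_n, sigma_n)  (0-indexed: run 0 = s). *)
Fixpoint tr_run (A : transducer) (s : tr_state A) (psi : nat -> bool) (n : nat)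
  : tr_state A :=
  match n with
  | 0 => s
  | n'.+1 => tr_trans (tr_run s psi n') (psi n')
  end.

Definition tr_outprefix (A : transducer) (s : tr_state A) (psi : nat -> bool)
  (m : nat) : seq bool :=
  flatten [seq tr_out (tr_run s psi n) (psi n) | n <- iota 0 m].

Definition is_prefix (w : seq bool) (phi : nat -> bool) : Prop :=
  forall i, i < size w -> nth false w i = phi i.

(* o(s, psi) = phi : the infinite concatenation of outputs is the infinite
   sequence phi (every finite concatenation is a prefix of phi, and the
   concatenations have unbounded length). *)
Definition tr_output_eq (A : transducer) (s : tr_state A) (psi phi : nat -> bool)
  : Prop :=
  (forall m, is_prefix (tr_outprefix s psi m) phi) /\
  (forall k, exists m, k <= size (tr_outprefix s psi m)).

Definition rational_homeo (f : cantor_space -> cantor_space) : Prop :=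
  homeomorphism f /\
  exists A : transducer, forall psi, tr_output_eq (tr_init A) psi (f psi).

(* Main.v *)
Require Import Defs.
From HB Require Import structures.
From mathcomp Require Import all_boot all_order all_algebra.
From mathcomp Require Import all_classical all_reals all_analysis.
From mathcomp Require Import zify.
Set Implicit Arguments.
Unset Strict Implicit.
Unset Printing Implicit Defensive.
Local Open Scope classical_set_scope.
Lemma prefix_nbhs (b : cantor_space) (n : nat) :
  \forall c \near b, forall i, (i < n)%N -> b i = c i.
Proof.
elim: n => [|n IH]; first by near=> z => ?; rewrite ltn0.
near=> z => i; rewrite leq_eqVlt => /predU1P[|iSn]; last by rewrite (near IH z).
move=> [->]; near: z; exists (proj n @^-1` [set b n]).
split => //; suff : @open cantor_space (proj n @^-1` [set b n]) by [].
apply: open_comp; [move=> + _; exact: proj_continuous| apply: discrete_open].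
Unshelve. all: end_near. Qed.

Lemma cyl_nbhs (x : cantor_space) (U : set cantor_space) :
  nbhs x U -> exists n, forall y, (forall i, (i < n)%N -> x i = y i) -> U y.
Proof.
pose G := filter_from [set: nat] (fun n => [set y : cantor_space | forall i, (i < n)%N -> x i = y i]).
have GF : Filter G.
  apply: filter_from_filter; first by exists 0%N.
  move=> i j _ _; exists (maxn i j) => // y Hy; split => k Hk; apply: Hy.
    exact: (leq_trans Hk (leq_maxl _ _)).
  exact: (leq_trans Hk (leq_maxr _ _)).
have : G --> x.
  apply/cvg_sup => i; apply/cvg_image => //.
  - by apply/seteqP; split => // c _; exists (fun _ => c).
  - move=> B /= /nbhs_singleton Bx.
    have [Bnx|Bnx] := pselect (B (~~ x i)).
      exists setT; first by exists 0%N.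
      apply/seteqP; split => [c _|c _]; first by case: c (x i) Bx Bnx => -[].
      by exists (fun _ => c).
    exists [set y : cantor_space | forall j, (j < i.+1)%N -> x j = y j].
      by exists i.+1.
    apply/seteqP; split => [c [y Hy <-]|c Bc].
      by rewrite -(Hy i (ltnSn i)).
    exists x => //; move: Bc Bnx Bx; case: c; case: (x i) => //.
move=> /(_ U) H /H [n _ Hn]; exists n => y Hy; exact: Hn.
Qed.

Definition cats (w : seq bool) (z : nat -> bool) : nat -> bool :=
  fun i => if (i < size w)%N then nth false w i else z (i - size w)%N.
Definition shft (n : nat) (z : nat -> bool) : nat -> bool := fun i => z (i + n)%N.
Definition blk (M : nat) (tau : seq bool -> seq bool) (x : nat -> bool) : nat -> bool :=
  cats (tau (mkseq x M)) (shft M x).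

Lemma cats_cat w1 w2 z : cats (w1 ++ w2) z = cats w1 (cats w2 z).
Proof.
apply: funext => i; rewrite /cats size_cat nth_cat.
have [h1|h1] := ltnP i (size w1).
  by have -> : (i < size w1 + size w2)%N by lia.
have -> : (i - size w1 < size w2)%N = (i < size w1 + size w2)%N by lia.
case: ifP => // _; congr z; lia.
Qed.

Lemma cats0s z : cats [::] z = z.
Proof. by apply: funext => i; rewrite /cats /= subn0. Qed.

Lemma mkseq_cats w z : mkseq (cats w z) (size w) = w.
Proof.
apply: (@eq_from_nth _ false); rewrite size_mkseq // => i hi.
by rewrite nth_mkseq // /cats hi.
Qed.

Lemma shft_cats w z : shft (size w) (cats w z) = z.
Proof.
apply: funext => i; rewrite /shft /cats.
have -> : (i + size w < size w)%N = false by lia.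
congr z; lia.
Qed.

Lemma cats_split x n : cats (mkseq x n) (shft n x) = x.
Proof.
apply: funext => i; rewrite /cats /shft size_mkseq.
case: ltnP => h; first by rewrite nth_mkseq.
congr x; lia.
Qed.

Lemma blk_cats M tau w z : size w = M -> blk M tau (cats w z) = cats (tau w) z.
Proof. by move=> <-; rewrite /blk mkseq_cats shft_cats. Qed.

Definition tauf (N : nat) (a b : seq bool) (w : seq bool) : seq bool :=
  if take N w != a then b ++ w
  else if drop N w != b then drop N w else b ++ a.

Lemma tauf_cancel N a b x : size a = N -> size b = N ->
  blk (N + N) (tauf N b a) (blk (N + N) (tauf N a b) x) = x.
Proof.
move=> sa sb.
rewrite -(cats_split x (N + N)).
set w := mkseq x (N + N); set z := shft (N + N) x.
have sw : size w = (N + N)%N by rewrite size_mkseq.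
rewrite blk_cats //.
have wE : w = take N w ++ drop N w by rewrite cat_take_drop.
have sv : size (take N w) = N by rewrite size_takel // sw leq_addr.
have sy : size (drop N w) = N by rewrite size_drop; lia.
have tk u v : size u = N -> take N (u ++ v) = u by move=> <-; rewrite take_size_cat.
have dr u v : size u = N -> drop N (u ++ v) = v by move=> <-; rewrite drop_size_cat.
rewrite /tauf; case: eqP => [va|/eqP vna] /=.
  case: eqP => [yb|/eqP ynb] /=.
    rewrite blk_cats; last by rewrite size_cat sa sb.
    rewrite tk // dr // eqxx /=.
    by rewrite eqxx -va -yb -wE.
  rewrite -(cats_split z N) -cats_cat blk_cats; last by rewrite size_cat sy size_mkseq.
  rewrite tk // (negPf ynb) /=.
  by rewrite catA cats_cat -va -wE.
rewrite [in b ++ w]wE catA cats_cat blk_cats; last by rewrite size_cat sb sv.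
rewrite tk // dr // eqxx (negPf vna) /=.
by rewrite -cats_cat -wE.
Qed.

Lemma blk_cont M tau : continuous (blk M tau : cantor_space -> cantor_space).
Proof.
move=> x U /cyl_nbhs [n Hn].
apply: filterS (prefix_nbhs x (M + n)) => y Hy; apply: Hn => i hi.
rewrite /blk; have -> : mkseq y M = mkseq x M.
  apply: (@eq_from_nth _ false); rewrite !size_mkseq // => j hj.
  by rewrite !nth_mkseq // Hy //; lia.
rewrite /cats; case: ifP => // _; rewrite /shft Hy //; lia.
Qed.

Lemma tauf_prefix N a b x i : size b = N -> mkseq x N != a -> (i < N)%N ->
  blk (N + N) (tauf N a b) x i = nth false b i.
Proof.
move=> sb xa hi.
rewrite -(cats_split x (N + N)) blk_cats ?size_mkseq //.
rewrite /tauf; have -> : take N (mkseq x (N + N)) = mkseq x N.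
  by rewrite /mkseq iotaD map_cat take_size_cat // size_map size_iota.
rewrite xa /cats size_cat sb.
by rewrite nth_cat sb hi (_ : (i < N + _)%N) //; lia.
Qed.

Section Trans.
Variables (M : nat) (tau : seq bool -> seq bool).
Hypothesis M0 : (0 < M)%N.

Definition bst := ('I_M.+1 * {ffun 'I_M -> bool})%type.
Definition btrans (s : bst) (c : bool) : bst :=
  let: (k, f) := s in
  if (k < M)%N then (inord k.+1, [ffun j : 'I_M => if nat_of_ord j == nat_of_ord k then c else f j])
  else (k, f).
Definition bout (s : bst) (c : bool) : seq bool :=
  let: (k, f) := s in
  if k.+1 == M then tau [seq (if nat_of_ord j == nat_of_ord k then c else f j) | j <- enum 'I_M]
  else if nat_of_ord k == M then [:: c] else [::].
Definition bA := Transducer (ord0, [ffun=> false] : {ffun 'I_M -> bool}) btrans bout.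

Lemma brun psi n : @tr_run bA (tr_init bA) psi n =
  (inord (minn n M), [ffun j : 'I_M => if (j < n)%N then psi (nat_of_ord j) else false]).
Proof.
elim: n => [|n IH] /=.
  by congr pair; apply: val_inj; rewrite min0n /= inordK.
rewrite IH /= inordK; last by rewrite ltnS geq_minr.
have [nM|Mn] := ltnP n M.
  rewrite nM (minn_idPl nM); congr pair.
  apply/ffunP => j; rewrite !ffunE.
  have [->|hne] := eqVneq (nat_of_ord j) n; first by rewrite ltnSn.
  by rewrite ltnS; case: ltngtP hne => // ->; rewrite eqxx.
rewrite ltnn (minn_idPr (leqW Mn)); congr pair.
apply/ffunP => j; rewrite !ffunE.
have h : (j < n)%N := leq_trans (ltn_ord j) Mn.
by rewrite h (leqW h).
Qed.

Lemma bprefix psi m : @tr_outprefix bA (tr_init bA) psi m =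
  if (m < M)%N then [::] else tau (mkseq psi M) ++ [seq psi i | i <- iota M (m - M)].
Proof.
elim: m => [|m IH]; first by rewrite M0.
rewrite /tr_outprefix -addn1 iotaD map_cat flatten_cat -/(tr_outprefix _ psi m) IH /=.
rewrite cats0 add0n brun /= inordK; last by rewrite ltnS geq_minr.
clear IH.
have [mM|Mm] := ltnP m M.
  rewrite cat0s addn1.
  case: (ltnP m.+1 M) => h.
    by rewrite (ltn_eqF h) (ltn_eqF mM) ?h.
  have mE : m.+1 = M by apply/eqP; rewrite eqn_leq h mM.
  rewrite mE eqxx subnn /= cats0; congr tau.
  rewrite /mkseq -val_enum_ord -map_comp; apply: eq_map => j /=.
  rewrite ffunE; have [hj|hj] := eqVneq (nat_of_ord j) m; first by rewrite hj ?eqxx.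
  have hlt : (j < m.+1)%N by rewrite mE.
  have hjm : (j < m)%N by rewrite ltn_neqAle hj -ltnS.
  by rewrite hjm.
rewrite (_ : (M.+1 == M) = false) ?eqxx; last by rewrite gtn_eqF.
rewrite (_ : (m + 1 < M)%N = false); last by rewrite addn1 ltnNge leqW.
rewrite -catA; congr cat.
have -> : (m + 1 - M = (m - M) + 1)%N by rewrite !addn1 subSn.
by rewrite iotaD map_cat /= subnKC.
Qed.

Lemma bA_ok psi : tr_output_eq (tr_init bA) psi (blk M tau psi).
Proof.
split.
  move=> m i; rewrite bprefix.
  case: (ltnP m M) => // hm.
  rewrite size_cat size_map size_iota nth_cat => hi.
  rewrite /blk /cats; case: ltnP => // h.
  rewrite (nth_map 0%N); last by rewrite size_iota; lia.
  rewrite nth_iota; last by lia.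
  by rewrite /shft addnC.
move=> k; exists (k + M)%N; rewrite bprefix.
rewrite (_ : (k + M < M)%N = false); last by lia.
by rewrite size_cat size_map size_iota; lia.
Qed.

End Trans.

Theorem proposition2p5 :
  forall E1 E2 : set cantor_space,
    clopen E1 -> E1 !=set0 -> E1 <> setT ->
    clopen E2 -> E2 !=set0 -> E2 <> setT ->
    exists g : cantor_space -> cantor_space,
      rational_homeo g /\ g @` E1 `<=` E2.
Proof.
move=> E1 E2 [_ cE1] _ nE1T [oE2 _] [x2 E2x2] _.
have [x0 nx0] : exists x0, ~ E1 x0 by apply/setTPn; apply/eqP.
have [n1 H1] : exists n, forall y : cantor_space,
    (forall i, (i < n)%N -> x0 i = y i) -> (~` E1) y.
  by apply: cyl_nbhs; apply: open_nbhs_nbhs; split => //; rewrite openC.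
have [n2 H2] : exists n, forall y : cantor_space,
    (forall i, (i < n)%N -> x2 i = y i) -> E2 y.
  by apply: cyl_nbhs; apply: open_nbhs_nbhs; split.
set N := maxn (maxn n1 n2) 1.
have hn1 : (n1 <= N)%N by rewrite /N; lia.
have hn2 : (n2 <= N)%N by rewrite /N; lia.
have hN : (0 < N)%N by rewrite /N; lia.
set a := mkseq x0 N; set b := mkseq x2 N.
have sa : size a = N by rewrite size_mkseq.
have sb : size b = N by rewrite size_mkseq.
exists (blk (N + N) (tauf N a b)); split.
  split.
    exists (blk (N + N) (tauf N b a)); split.
    - by move=> x; apply: tauf_cancel.
    - by move=> x; apply: tauf_cancel.
    - exact: blk_cont.
    - exact: blk_cont.
  exists (bA (N + N) (tauf N a b)) => psi.
  by apply: bA_ok; rewrite addn_gt0 hN.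
move=> _ [x E1x <-].
have xa : mkseq x N != a.
  apply/negP => /eqP hx; apply: (H1 x) E1x => i hi.
  have hiN : (i < N)%N := leq_trans hi hn1.
  have := congr1 (fun s => nth false s i) hx.
  by rewrite /a !nth_mkseq.
apply: H2 => i hi.
have hiN : (i < N)%N := leq_trans hi hn2.
by rewrite tauf_prefix // /b nth_mkseq.
Qed.
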